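(* Let $n$ be a prime with $n\equiv 1$ or $5\pmod 6$. Then there exists a one-factorization $\mathcal{R}$ of $K_{2n}$ on the vertex set $\{0,1,\dots,2n-1\}$ such that: (1) if $n\equiv 5\pmod 6$, then $\mathcal{R}=\{\mathcal{R}_{i,j}: 1\le i\le \frac{2n-1}{3},\ 1\le j\le 3\}$, where $\mathcal{R}_{i,1}\cup\mathcal{R}_{i,2}\cup\mathcal{R}_{i,3}=\mathcal{A}_i\cup\mathcal{B}_i\cup\mathcal{C}_{i-1}$ for $1\le i\le\frac{n-1}{2}$, and $\mathcal{R}_{i,1}=\mathcal{C}_{3i-n-2}$, $\mathcal{R}_{i,2}=\mathcal{C}_{3i-n-1}$, $\mathcal{R}_{i,3}=\mathcal{C}_{3i-n}$ for $\frac{n+1}{2}\le i\le\frac{2n-1}{3}$; (2) if $n\equiv 1\pmod 6$, then $\mathcal{R}=\{\mathcal{R}_{i,j}: 1\le i\le\frac{n-1}{2},\ 1\le j\le 3\}\cup\{\mathcal{C}_i:\frac{n-1}{2}\le i\le n-1\}$, where $\mathcal{R}_{i,1}\cup\mathcal{R}_{i,2}\cup\mathcal{R}_{i,3}=\mathcal{A}_i\cup\mathcal{B}_i\cup\mathcal{C}_{i-1}$ for $1\le i\le \frac{n-1}{2}$.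
   Context: For $1\le i\le \frac{n-1}{2}$: $\mathcal{A}_i=\{\{x,y\}: x,y\in\{0,\dots,n-1\},\ y-x\equiv i \pmod n\}$ and $\mathcal{B}_i=\{\{x,y\}: x,y\in\{n,\dots,2n-1\},\ y-x\equiv i\pmod n\}$. For $0\le i\le n-1$: $\mathcal{C}_i=\{\{x,y\}: 0\le x\le n-1,\ n\le y\le 2n-1,\ x+y\equiv i\pmod n\}$. A one-factor of $K_{2n}$ is a perfect matching; a one-factorization is a partition of the edge set of $K_{2n}$ into $2n-1$ one-factors. *)

(* Defs.v *)
From mathcomp Require Import all_boot.
Set Implicit Arguments. Unset Strict Implicit. Unset Printing Implicit Defensive.

Definition Aset (n i : nat) : {set {set 'I_(2*n)}} :=
  [set e : {set 'I_(2*n)} | [exists x : 'I_(2*n), exists y : 'I_(2*n),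
     [&& e == [set x; y], x < n, y < n & (y + n - x) %% n == i %% n]]].

Definition Bset (n i : nat) : {set {set 'I_(2*n)}} :=
  [set e : {set 'I_(2*n)} | [exists x : 'I_(2*n), exists y : 'I_(2*n),
     [&& e == [set x; y], n <= x, n <= y & (y + n - x) %% n == i %% n]]].

Definition Cset (n i : nat) : {set {set 'I_(2*n)}} :=
  [set e : {set 'I_(2*n)} | [exists x : 'I_(2*n), exists y : 'I_(2*n),
     [&& e == [set x; y], x < n, n <= y & (x + y) %% n == i %% n]]].

Definition K_edges (n : nat) : {set {set 'I_(2*n)}} :=
  [set e : {set 'I_(2*n)} | #|e| == 2].

Definition one_factor (n : nat) (F : {set {set 'I_(2*n)}}) : Prop :=
  F \subset K_edges n /\
  forall v : 'I_(2*n), #|[set e in F | v \in e]| = 1.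

Definition one_factorization (n : nat) (R : {set {set {set 'I_(2*n)}}}) : Prop :=
  partition R (K_edges n) /\
  (forall F, F \in R -> one_factor F) /\
  #|R| = 2 * n - 1.

Arguments Aset : clear implicits.
Arguments Bset : clear implicits.
Arguments Cset : clear implicits.

(* Main.v *)
Require Import Defs.
From mathcomp Require Import all_boot.
From mathcomp Require Import zify.
Set Implicit Arguments. Unset Strict Implicit. Unset Printing Implicit Defensive.


Section Arith.
Variable n : nat.

Lemma subn_modE x a b : x <= a ->
  ((a - x) %% n == b %% n) = (a %% n == (b + x) %% n).
Proof. by move=> H; rewrite -(eqn_modDr x) subnK. Qed.

Lemma mul_mod_inj i a b : coprime n i -> (a * i) %% n = (b * i) %% n ->
  a < b + n -> b < a + n -> a = b.
Proof.
move=> co.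
wlog le: a b / b <= a.
  move=> W E H1 H2; case: (leqP b a) => h; first exact: W.
  by symmetry; apply: W => //; lia.
move=> /eqP E H1 H2.
rewrite eqn_mod_dvd ?leq_mul2r ?le ?orbT // -mulnBl Gauss_dvdl // in E.
case: (posnP (a - b)) => h; first lia.
have := dvdn_leq h E; lia.
Qed.

Definition phin (i c p : nat) : nat :=
  if p < n then (p * i) %% n else n + (c + (n - (p - n)) * i) %% n.

Lemma phin_lt i c p : p < 2 * n -> phin i c p < 2 * n.
Proof.
move=> H; have n0 : 0 < n by lia.
rewrite /phin; case: ifP => _.
  have := ltn_pmod (p * i) n0; lia.
have := ltn_pmod (c + (n - (p - n)) * i) n0; lia.
Qed.

Lemma phin_side i c p : p < 2 * n -> (phin i c p < n) = (p < n).
Proof.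
move=> H; have n0 : 0 < n by lia.
rewrite /phin; case: ifP => h.
  by rewrite ltn_pmod.
lia.
Qed.

Lemma phin_inj i c p q : coprime n i -> p < 2 * n -> q < 2 * n ->
  phin i c p = phin i c q -> p = q.
Proof.
move=> co Hp Hq E.
have S := phin_side i c Hp; have S' := phin_side i c Hq.
move: E; rewrite /phin.
case: ifP => hp; case: ifP => hq.
- move=> E; apply: (mul_mod_inj co E); lia.
- move=> E; exfalso; have : phin i c p < n by rewrite S hp.
  have : ~~ (phin i c q < n) by rewrite S' hq.
  rewrite /phin hp hq E; lia.
- move=> E; exfalso; have : phin i c q < n by rewrite S' hq.
  have : ~~ (phin i c p < n) by rewrite S hp.
  rewrite /phin hp hq E; lia.
- move=> /eqP; rewrite eqn_add2l => /eqP; move/eqP; rewrite eqn_modDl => /eqP E.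
  have := mul_mod_inj co E; lia.
Qed.

End Arith.


Section Pos.
Variable n : nat.
Definition nA p := if p == n.-1 then 0 else p + 1.
Definition nB p := if p == n then (2*n).-1 else p - 1.

Lemma m1 i c p : p < n -> (phin n i c (nA p) + n - phin n i c p) %% n = i %% n.
Proof.
move=> Hp; have n0 : 0 < n by lia.
have hA : nA p < n by rewrite /nA; case: ifP; lia.
rewrite /phin hA Hp; apply/eqP.
have hx := ltn_pmod (p * i) n0.
rewrite subn_modE; last lia.
rewrite modnDr modn_mod modnDmr.
rewrite /nA; case: ifP => h.
  rewrite mul0n mod0n.
  have -> : i + p * i = n * i by rewrite -{1}(mul1n i) -mulnDl; congr (_ * _); lia.
  by rewrite modnMr.
by rewrite mulnDl mul1n addnC.
Qed.

Lemma m2 i c p : n <= p < 2 * n -> (phin n i c (nB p) + n - phin n i c p) %% n = i %% n.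
Proof.
move=> Hp; have n0 : 0 < n by lia.
have hB : n <= nB p < 2 * n by rewrite /nB; case: ifP; lia.
rewrite /phin.
have -> : (p < n) = false by lia.
have -> : (nB p < n) = false by lia.
set X := (c + (n - (p - n)) * i) %% n; set Y := (c + (n - (nB p - n)) * i) %% n.
have -> : n + Y + n - (n + X) = Y + n - X by lia.
apply/eqP; have hx := ltn_pmod (c + (n - (p - n)) * i) n0.
rewrite subn_modE; last (rewrite /X; lia).
rewrite modnDr /Y /X modn_mod modnDmr.
rewrite /nB; case: ifP => h.
  have -> : n - ((2 * n).-1 - n) = 1 by lia.
  have -> : n - (p - n) = n by lia.
  have -> : i + (c + n * i) = i * n + (c + 1 * i) by lia.
  by rewrite modnMDl.
have -> : n - (p - 1 - n) = (n - (p - n)) + 1 by lia.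
by rewrite mulnDl mul1n; apply/eqP; congr (_ %% _); lia.
Qed.

Lemma m3 i c p : p < n -> (phin n i c p + phin n i c (p + n)) %% n = c %% n.
Proof.
move=> Hp; have n0 : 0 < n by lia.
rewrite /phin Hp.
have -> : (p + n < n) = false by lia.
rewrite modnDml addnCA modnDl modnDmr.
have -> : p + n - n = p by lia.
have E : p * i + (n - p) * i = i * n by rewrite -mulnDl mulnC; congr (_ * _); lia.
have -> : p * i + (c + (n - p) * i) = i * n + c by lia.
by rewrite modnMDl.
Qed.

End Pos.


Section G.
Variable n : nat.
Definition kk p := if p < n then p else p - n.
Definition oth p := if p < n then p + n else p - n.
Definition G0 p := if kk p == n.-1 then oth p else if kk p %% 2 == 1 then p - 1 else p + 1.
Definition G1 p := if kk p == 0 then oth p else if kk p %% 2 == 1 then p + 1 else p - 1.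
Definition G2 p := if kk p == 0 then p + n.-1 else if kk p == n.-1 then p - n.-1 else oth p.
Definition Gs (j : nat) := if j == 1 then G0 else if j == 2 then G1 else G2.

Hypothesis nodd : n %% 2 = 1.
Hypothesis n3 : 3 <= n.

Ltac split_if := match goal with |- context [if ?b then _ else _] =>
  lazymatch b with context [if _ then _ else _] => fail | _ =>
  let H := fresh "H" in case H: b; cbv iota end end.
Ltac crunch := rewrite /Gs /G0 /G1 /G2 /kk /oth /nA /nB; repeat split_if; lia.

Lemma oth_lt p : p < 2 * n -> oth p < 2 * n.
Proof. rewrite /oth; case: ifP; lia. Qed.
Lemma oth_inv p : p < 2 * n -> oth (oth p) = p.
Proof. rewrite /oth; repeat split_if; lia. Qed.
Lemma oth_nfix p : p < 2 * n -> oth p != p.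
Proof. rewrite /oth; repeat split_if; lia. Qed.

Lemma G0_lt p : p < 2 * n -> G0 p < 2 * n. Proof. crunch. Qed.
Lemma G1_lt p : p < 2 * n -> G1 p < 2 * n. Proof. crunch. Qed.
Lemma G2_lt p : p < 2 * n -> G2 p < 2 * n. Proof. crunch. Qed.
Lemma G0_inv p : p < 2 * n -> G0 (G0 p) = p. Proof. crunch. Qed.
Lemma G1_inv p : p < 2 * n -> G1 (G1 p) = p. Proof. crunch. Qed.
Lemma G2_inv p : p < 2 * n -> G2 (G2 p) = p. Proof. crunch. Qed.

Lemma G0_nfix p : p < 2 * n -> G0 p != p. Proof. crunch. Qed.
Lemma G1_nfix p : p < 2 * n -> G1 p != p. Proof. crunch. Qed.
Lemma G2_nfix p : p < 2 * n -> G2 p != p. Proof. crunch. Qed.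
Lemma G01 p : p < 2 * n -> G0 p != G1 p. Proof. crunch. Qed.
Lemma G02 p : p < 2 * n -> G0 p != G2 p. Proof. crunch. Qed.
Lemma G12 p : p < 2 * n -> G1 p != G2 p. Proof. crunch. Qed.

Definition adj p q := [|| [&& p < n, q < n & q == nA n p], [&& p < n, q < n & p == nA n q],
  [&& n <= p, n <= q & q == nB n p], [&& n <= p, n <= q & p == nB n q],
  (p < n) && (q == p + n) | (q < n) && (p == q + n)].

Lemma G0_adj p : p < 2 * n -> adj p (G0 p). Proof. rewrite /adj; crunch. Qed.
Lemma G1_adj p : p < 2 * n -> adj p (G1 p). Proof. rewrite /adj; crunch. Qed.
Lemma G2_adj p : p < 2 * n -> adj p (G2 p). Proof. rewrite /adj; crunch. Qed.

Lemma GsE j : [\/ Gs j = G0, Gs j = G1 | Gs j = G2].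
Proof. rewrite /Gs; case: ifP => _; first by constructor. case: ifP => _; by constructor. Qed.

Lemma Gs_lt j p : p < 2 * n -> Gs j p < 2 * n.
Proof. by case: (GsE j) => ->; [apply: G0_lt|apply: G1_lt|apply: G2_lt]. Qed.
Lemma Gs_inv j p : p < 2 * n -> Gs j (Gs j p) = p.
Proof. by case: (GsE j) => ->; [apply: G0_inv|apply: G1_inv|apply: G2_inv]. Qed.
Lemma Gs_nfix j p : p < 2 * n -> Gs j p != p.
Proof. by case: (GsE j) => ->; [apply: G0_nfix|apply: G1_nfix|apply: G2_nfix]. Qed.
Lemma Gs_adj j p : p < 2 * n -> adj p (Gs j p).
Proof. by case: (GsE j) => ->; [apply: G0_adj|apply: G1_adj|apply: G2_adj]. Qed.
Lemma Gs_dist j j' p : p < 2 * n -> 1 <= j <= 3 -> 1 <= j' <= 3 -> j != j' -> Gs j p != Gs j' p.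
Proof.
move=> hp; case: j => [|[|[|[|j]]]] //= _; case: j' => [|[|[|[|j']]]] //= _ _;
rewrite /Gs /=; rewrite ?G01 ?G02 ?G12 // eq_sym ?G01 ?G02 ?G12 //.
Qed.

Lemma Gs_A p : p < n -> exists2 j, 1 <= j <= 3 & Gs j p = nA n p.
Proof.
move=> hp.
case: (boolP (p == n.-1)) => h1; first (exists 3 => //; crunch).
case: (boolP (p %% 2 == 1)) => h2; first (exists 2 => //; crunch).
exists 1 => //; crunch.
Qed.

Lemma Gs_B p : n <= p < 2 * n -> exists2 j, 1 <= j <= 3 & Gs j p = nB n p.
Proof.
move=> hp.
case: (boolP (p == n)) => h1; first (exists 3 => //; crunch).
case: (boolP ((p - n) %% 2 == 1)) => h2; first (exists 1 => //; crunch).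
exists 2 => //; crunch.
Qed.

Lemma Gs_C p : p < n -> exists2 j, 1 <= j <= 3 & Gs j p = p + n.
Proof.
move=> hp.
case: (boolP (p == n.-1)) => h1; first (exists 1 => //; crunch).
case: (boolP (p == 0)) => h2; first (exists 2 => //; crunch).
exists 3 => //; crunch.
Qed.
End G.


Section F.
Variable n : nat.
Definition ordf (f : nat -> nat) (p : 'I_(2*n)) : 'I_(2*n) := insubd p (f p).
Lemma ordfE (f : nat -> nat) (p : 'I_(2*n)) : f p < 2 * n -> nat_of_ord (ordf f p) = f p.
Proof. by move=> h; have := val_insubd p (f p); rewrite h. Qed.

Definition Fac (phi G : 'I_(2*n) -> 'I_(2*n)) : {set {set 'I_(2*n)}} :=
  [set [set phi p; phi (G p)] | p : 'I_(2*n)].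

Lemma set2_eq (T : finType) (x y x' y' : T) : [set x; y] = [set x'; y'] ->
  (x = x' /\ y = y') \/ (x = y' /\ y = x').
Proof.
move=> E.
have hx : x \in [set x'; y'] by rewrite -E set21.
have hy : y \in [set x'; y'] by rewrite -E set22.
have hx' : x' \in [set x; y] by rewrite E set21.
have hy' : y' \in [set x; y] by rewrite E set22.
move: hx hy hx' hy'; rewrite !inE.
by do 4 (case/orP => /eqP ?); subst; auto.
Qed.

Lemma fac_one phi G : injective phi -> (forall p, G (G p) = p) -> (forall p, G p != p) ->
  one_factor (Fac phi G).
Proof.
move=> inj inv nf; split.
  apply/subsetP => e /imsetP [p _ ->]; rewrite inE cards2.
  by rewrite (inj_eq inj); have := nf p; rewrite eq_sym => ->.
move=> v.
have [p0 ->] : exists p0, v = phi p0.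
  have /codomP [p0 ->] := injF_onto inj v; by exists p0.
apply/eqP/cards1P; exists [set phi p0; phi (G p0)].
apply/setP => e; rewrite !inE; apply/andP/eqP.
  case=> /imsetP [p _ ->]; rewrite !inE => /orP [] /eqP /inj E.
    by rewrite E.
  by rewrite E inv setUC.
move=> ->; split; last by rewrite !inE eqxx. by apply/imsetP; exists p0.
Qed.

End F.


Section M.
Variable n : nat.
Hypothesis nodd : n %% 2 = 1.
Hypothesis n3 : 3 <= n.

Definition phio i c := @ordf n (phin n i c).
Definition Gso j := @ordf n (Gs n j).
Definition otho := @ordf n (oth n).

Lemma phioE i c (p : 'I_(2*n)) : nat_of_ord (phio i c p) = phin n i c p.
Proof. by rewrite ordfE // phin_lt. Qed.
Lemma GsoE j (p : 'I_(2*n)) : nat_of_ord (Gso j p) = Gs n j p.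
Proof. by rewrite ordfE // Gs_lt. Qed.
Lemma othoE (p : 'I_(2*n)) : nat_of_ord (otho p) = oth n p.
Proof. by rewrite ordfE // oth_lt. Qed.

Lemma phio_inj i c : coprime n i -> injective (phio i c).
Proof.
move=> co p q /(congr1 (@nat_of_ord _)); rewrite !phioE => E; apply: ord_inj.
exact: (phin_inj co (ltn_ord p) (ltn_ord q) E).
Qed.

Lemma Gso_inv j p : Gso j (Gso j p) = p.
Proof. by apply: ord_inj; rewrite !GsoE Gs_inv. Qed.
Lemma Gso_nfix j p : Gso j p != p.
Proof. by rewrite -(inj_eq (@ord_inj _)) GsoE Gs_nfix. Qed.
Lemma otho_inv p : otho (otho p) = p.
Proof. by apply: ord_inj; rewrite !othoE oth_inv. Qed.
Lemma otho_nfix p : otho p != p.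
Proof. by rewrite -(inj_eq (@ord_inj _)) othoE oth_nfix. Qed.

Definition M i j := Fac (phio i (i - 1)) (Gso j).
Definition Cf k := Fac (phio 1 k) otho.

Lemma M_one i j : coprime n i -> one_factor (M i j).
Proof. move=> co; apply: fac_one; [exact: phio_inj|exact: Gso_inv|exact: Gso_nfix]. Qed.
Lemma Cf_one k : one_factor (Cf k).
Proof. apply: fac_one; [apply: phio_inj; exact: coprimen1|exact: otho_inv|exact: otho_nfix]. Qed.

Lemma edgeA i c (p q : 'I_(2*n)) : p < n -> nat_of_ord q = nA n p ->
  [set phio i c p; phio i c q] \in Aset n i.
Proof.
move=> hp hq; rewrite inE; apply/existsP; exists (phio i c p); apply/existsP; exists (phio i c q).
have hqn : q < n by rewrite hq /nA; case: ifP; lia.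
rewrite eqxx !phioE !phin_side // hp hqn /=.
by rewrite hq m1.
Qed.

Lemma edgeB i c (p q : 'I_(2*n)) : n <= p -> nat_of_ord q = nB n p ->
  [set phio i c p; phio i c q] \in Bset n i.
Proof.
move=> hp hq; rewrite inE; apply/existsP; exists (phio i c p); apply/existsP; exists (phio i c q).
have hqn : n <= q by rewrite hq /nB; case: ifP; lia.
have hx : n <= phin n i c p by rewrite leqNgt phin_side // -leqNgt.
have hy : n <= phin n i c q by rewrite leqNgt phin_side // -leqNgt.
rewrite eqxx !phioE hx hy /=.
by rewrite hq m2 // hp ltn_ord.
Qed.

Lemma edgeC i c (p q : 'I_(2*n)) : p < n -> nat_of_ord q = p + n ->
  [set phio i c p; phio i c q] \in Cset n c.
Proof.
move=> hp hq; rewrite inE; apply/existsP; exists (phio i c p); apply/existsP; exists (phio i c q).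
have hqn : n <= q by rewrite hq; lia.
have hy : n <= phin n i c q by rewrite leqNgt phin_side // -leqNgt.
rewrite eqxx !phioE phin_side // hp hy /=.
by rewrite hq m3.
Qed.

Lemma edge_adj i c (p q : 'I_(2*n)) : adj n p q ->
  [set phio i c p; phio i c q] \in Aset n i :|: Bset n i :|: Cset n c.
Proof.
rewrite /adj !in_setU.
case/or4P => [/and3P [h1 h2 /eqP h3]|/and3P [h1 h2 /eqP h3]|/and3P [h1 h2 /eqP h3]|].
- by rewrite edgeA.
- by rewrite setUC edgeA.
- by rewrite edgeB ?orbT.
case/or3P => [/and3P [h1 h2 /eqP h3]|/andP [h1 /eqP h3]|/andP [h1 /eqP h3]].
- by rewrite setUC edgeB ?orbT.
- by rewrite edgeC ?orbT.
- by rewrite setUC edgeC ?orbT.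
Qed.

End M.


Section D.
Variable n : nat.
Hypothesis nodd : n %% 2 = 1.
Hypothesis n3 : 3 <= n.

Lemma window a b : a %% n = b %% n -> a < b + n -> b < a + n -> a = b.
Proof. move=> E; apply: (@mul_mod_inj n 1); rewrite ?muln1 ?coprimen1 //. Qed.

Lemma subsame a b x : (a + n - x) %% n = (b + n - x) %% n -> x <= a + n -> x <= b + n ->
  a %% n = b %% n.
Proof.
move=> /eqP E ha hb; apply/eqP; move: E.
by rewrite -(eqn_modDr x) !subnK // !eqn_modDr.
Qed.

Lemma surj_phio i c (co : coprime n i) (x : 'I_(2*n)) : exists p, x = @phio n i c p.
Proof. have /codomP [p ->] := injF_onto (@phio_inj n i c co) x; by exists p. Qed.

Lemma decompA i c e : coprime n i -> e \in Aset n i ->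
  exists p q : 'I_(2*n), [/\ nat_of_ord p < n, nat_of_ord q = nA n p & e = [set @phio n i c p; @phio n i c q]].
Proof.
move=> co; rewrite inE => /existsP [x /existsP [y /and4P [/eqP -> hx hy /eqP hm]]].
have [p hp] := surj_phio c co x.
have hpn : nat_of_ord p < n by rewrite -(phin_side i c (ltn_ord p)) -phioE -hp.
have hq : nA n p < 2 * n by rewrite /nA; case: ifP; lia.
exists p, (@ordf n (nA n) p); rewrite ordfE //; split => //.
congr [set _; _] => //; apply: ord_inj; rewrite phioE ordfE //.
have hnA : nA n p < n by rewrite /nA; case: ifP; lia.
have := m1 i c hpn; rewrite -phioE -hp -hm => E.
have hb : phin n i c (nA n p) < n by rewrite phin_side.
have E2 : phin n i c (nA n p) = y %[mod n] by apply: (subsame E); lia.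
apply: (window (esym E2)); lia.
Qed.

Lemma decompB i c e : coprime n i -> e \in Bset n i ->
  exists p q : 'I_(2*n), [/\ n <= p, nat_of_ord q = nB n p & e = [set @phio n i c p; @phio n i c q]].
Proof.
move=> co; rewrite inE => /existsP [x /existsP [y /and4P [/eqP -> hx hy /eqP hm]]].
have [p hp] := surj_phio c co x.
have hpn : n <= nat_of_ord p.
  have := phin_side i c (ltn_ord p); rewrite -phioE -hp; lia.
have hp2 := ltn_ord p.
have hq : nB n p < 2 * n by rewrite /nB; case: ifP; lia.
exists p, (@ordf n (nB n) p); rewrite ordfE //; split => //.
congr [set _; _] => //; apply: ord_inj; rewrite phioE ordfE //.
have hnB : n <= nB n p by rewrite /nB; case: ifP; lia.
have := m2 i c (n:=n) (p:=p); rewrite hpn hp2 => /(_ isT).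
rewrite -phioE -hp -hm => E.
have hb : n <= phin n i c (nB n p).
  have := phin_side i c hq; lia.
have hb2 : phin n i c (nB n p) < 2 * n by apply: phin_lt.
have hy2 := ltn_ord y.
have hx2 := ltn_ord x. have E2 : phin n i c (nB n p) = y %[mod n] by apply: (subsame E); lia.
apply: (window (esym E2)); lia.
Qed.

Lemma decompC i c e : coprime n i -> e \in Cset n c ->
  exists p q : 'I_(2*n), [/\ p < n, nat_of_ord q = p + n & e = [set @phio n i c p; @phio n i c q]].
Proof.
move=> co; rewrite inE => /existsP [x /existsP [y /and4P [/eqP -> hx hy /eqP hm]]].
have [p hp] := surj_phio c co x.
have hpn : nat_of_ord p < n by rewrite -(phin_side i c (ltn_ord p)) -phioE -hp.
have hq : p + n < 2 * n by lia.
exists p, (@ordf n (addn^~ n) p); rewrite ordfE //; split => //.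
congr [set _; _] => //; apply: ord_inj; rewrite phioE ordfE //.
have := m3 i c hpn; rewrite -phioE -hp -hm => /eqP; rewrite eqn_modDl => /eqP E.
have hb : n <= phin n i c (p + n).
  have := phin_side i c hq; lia.
have hb2 : phin n i c (p + n) < 2 * n by apply: phin_lt.
have hy2 := ltn_ord y.
apply: (window (esym E)); lia.
Qed.

End D.


Section U.
Variable n : nat.
Hypothesis nodd : n %% 2 = 1.
Hypothesis n3 : 3 <= n.

Lemma inM i j e : 1 <= j <= 3 -> e \in M n i j -> e \in M n i 1 :|: M n i 2 :|: M n i 3.
Proof.
by case: j => [|[|[|[|j]]]] //= _ h; rewrite !in_setU h ?orbT.
Qed.

Lemma inM' i j e c : Gs n j (nat_of_ord e) = nat_of_ord c -> 
  [set @phio n i (i - 1) e; phio i (i - 1) c] \in M n i j.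
Proof.
move=> h; apply/imsetP; exists e => //; congr [set _; phio _ _ _].
by apply: ord_inj; rewrite (GsoE nodd n3).
Qed.

Lemma M_union i : coprime n i ->
  M n i 1 :|: M n i 2 :|: M n i 3 = Aset n i :|: Bset n i :|: Cset n (i - 1).
Proof.
move=> co; apply/setP => e; apply/idP/idP.
  case/setUP => [/setUP []|] => /imsetP [p _ ->]; apply: (edge_adj nodd n3); rewrite (GsoE nodd n3);
  exact: (Gs_adj nodd n3).
case/setUP => [/setUP []|].
- case/(decompA nodd n3 (i - 1) co) => [p [q [hp hq ->]]].
  have [j hj hG] := Gs_A nodd n3 hp.
  by apply: (inM hj); apply: inM'; rewrite hG hq.
- case/(decompB nodd n3 (i - 1) co) => [p [q [hp hq ->]]].
  have hp' : n <= p < 2 * n by rewrite hp ltn_ord.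
  have [j hj hG] := Gs_B nodd n3 hp'.
  by apply: (inM hj); apply: inM'; rewrite hG hq.
- case/(decompC nodd n3 (i:=i) (c:=i-1) co) => [p [q [hp hq ->]]].
  have [j hj hG] := Gs_C nodd n3 hp.
  by apply: (inM hj); apply: inM'; rewrite hG hq.
Qed.

Lemma CsetE k : Cset n k = Cf n k.
Proof.
apply/setP => e; apply/idP/idP.
  case/(decompC nodd n3 (i:=1) (c:=k) (coprimen1 n)) => [p [q [hp hq ->]]].
  apply/imsetP; exists p => //; congr [set _; phio _ _ _].
  by apply: ord_inj; rewrite (othoE nodd n3) hq /oth hp.
case/imsetP => p _ ->.
case: (ltnP p n) => hp.
  apply: (edgeC nodd n3) => //; rewrite (othoE nodd n3) /oth hp //.
rewrite setUC; apply: (edgeC nodd n3).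
  have := ltn_ord p; rewrite (othoE nodd n3) /oth; case: ifP; lia.
rewrite (othoE nodd n3) /oth; case: ifP; lia.
Qed.

Lemma Cset_one k : one_factor (Cset n k).
Proof. by rewrite CsetE; apply: (Cf_one nodd n3). Qed.

End U.


Section Dis.
Variable n : nat.
Definition disj (A B : {set {set 'I_(2*n)}}) := forall e, e \in A -> e \in B -> False.

Lemma disjU A B C : disj A C -> disj B C -> disj (A :|: B) C.
Proof. by move=> h1 h2 e /setUP [] h; [apply: h1|apply: h2]. Qed.
Lemma disjC A B : disj A B -> disj B A.
Proof. by move=> h e h1 h2; apply: (h e). Qed.

Lemma diff_contra x y i i' : x < y + n -> y < x + n -> 1 <= i -> 1 <= i' -> i + i' < n ->
  (y + n - x) %% n = i %% n -> (x + n - y) %% n = i' %% n -> False.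
Proof.
move=> h1 h2 h3 h4 h5 e1 e2.
have : (i + i') %% n = 0.
  rewrite -modnDm -e1 -e2 modnDm.
  have -> : y + n - x + (x + n - y) = 2 * n by lia.
  by rewrite modnMl.
rewrite modn_small; lia.
Qed.


Lemma disj_AA i i' : 1 <= i -> 1 <= i' -> i + i' < n -> i != i' -> disj (Aset n i) (Aset n i').
Proof.
move=> a b c d e; rewrite inE => /existsP [x /existsP [y /and4P [/eqP -> hx hy /eqP h1]]]; have bx := ltn_ord x; have bY := ltn_ord y;
  rewrite inE => /existsP [x' /existsP [y' /and4P [/eqP E hx' hy' /eqP h2]]];
  case: (set2_eq E) => [] [? ?]; subst.
  move: h1; rewrite h2 !modn_small; lia.
apply: (diff_contra _ _ a b c h1 h2); lia.
Qed.

Lemma disj_BB i i' : 1 <= i -> 1 <= i' -> i + i' < n -> i != i' -> disj (Bset n i) (Bset n i').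
Proof.
move=> a b c d e; rewrite inE => /existsP [x /existsP [y /and4P [/eqP -> hx hy /eqP h1]]]; have bx := ltn_ord x; have bY := ltn_ord y;
  rewrite inE => /existsP [x' /existsP [y' /and4P [/eqP E hx' hy' /eqP h2]]];
  case: (set2_eq E) => [] [? ?]; subst.
  move: h1; rewrite h2 !modn_small; lia.
apply: (diff_contra _ _ a b c h1 h2); lia.
Qed.

Lemma disj_AB i i' : disj (Aset n i) (Bset n i').
Proof. move=> e; rewrite inE => /existsP [x /existsP [y /and4P [/eqP -> hx hy /eqP h1]]]; have bx := ltn_ord x; have bY := ltn_ord y;
  rewrite inE => /existsP [x' /existsP [y' /and4P [/eqP E hx' hy' /eqP h2]]];
  case: (set2_eq E) => [] [? ?]; subst; lia. Qed.
Lemma disj_AC i i' : disj (Aset n i) (Cset n i').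
Proof. move=> e; rewrite inE => /existsP [x /existsP [y /and4P [/eqP -> hx hy /eqP h1]]]; have bx := ltn_ord x; have bY := ltn_ord y;
  rewrite inE => /existsP [x' /existsP [y' /and4P [/eqP E hx' hy' /eqP h2]]];
  case: (set2_eq E) => [] [? ?]; subst; lia. Qed.
Lemma disj_BC i i' : disj (Bset n i) (Cset n i').
Proof. move=> e; rewrite inE => /existsP [x /existsP [y /and4P [/eqP -> hx hy /eqP h1]]]; have bx := ltn_ord x; have bY := ltn_ord y;
  rewrite inE => /existsP [x' /existsP [y' /and4P [/eqP E hx' hy' /eqP h2]]];
  case: (set2_eq E) => [] [? ?]; subst; lia. Qed.
Lemma disj_CC k k' : k < n -> k' < n -> k != k' -> disj (Cset n k) (Cset n k').
Proof.
move=> a b c e; rewrite inE => /existsP [x /existsP [y /and4P [/eqP -> hx hy /eqP h1]]]; have bx := ltn_ord x; have bY := ltn_ord y;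
  rewrite inE => /existsP [x' /existsP [y' /and4P [/eqP E hx' hy' /eqP h2]]];
  case: (set2_eq E) => [] [? ?]; subst.
  move: h1; rewrite h2 !modn_small; lia.
lia.
Qed.

Lemma disj_ABC i i' : 1 <= i -> 1 <= i' -> i + i' < n -> i != i' ->
  disj (Aset n i :|: Bset n i :|: Cset n (i - 1)) (Aset n i' :|: Bset n i' :|: Cset n (i' - 1)).
Proof.
move=> a b c d.
have AA : disj (Aset n i') (Aset n i) by apply: disj_AA; lia.
have BB : disj (Bset n i') (Bset n i) by apply: disj_BB; lia.
have CC : disj (Cset n (i' - 1)) (Cset n (i - 1)) by apply: disj_CC; lia.
have X1 : disj (Aset n i' :|: Bset n i' :|: Cset n (i' - 1)) (Aset n i).
  apply: disjU; [apply: disjU|].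
  + exact: AA.
  + exact: (disjC (disj_AB (i:=i) (i':=i'))).
  + exact: (disjC (disj_AC (i:=i) (i':=i' - 1))).
have X2 : disj (Aset n i' :|: Bset n i' :|: Cset n (i' - 1)) (Bset n i).
  apply: disjU; [apply: disjU|].
  + exact: (disj_AB (i:=i') (i':=i)).
  + exact: BB.
  + exact: (disjC (disj_BC (i:=i) (i':=i' - 1))).
have X3 : disj (Aset n i' :|: Bset n i' :|: Cset n (i' - 1)) (Cset n (i - 1)).
  apply: disjU; [apply: disjU|].
  + exact: (disj_AC (i:=i') (i':=i - 1)).
  + exact: (disj_BC (i:=i') (i':=i - 1)).
  + exact: CC.
apply: disjU; [apply: disjU|].
+ exact: (disjC X1).
+ exact: (disjC X2).
+ exact: (disjC X3).
Qed.

Lemma disj_ABC_C i k : 1 <= i -> i <= k -> k < n ->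
  disj (Aset n i :|: Bset n i :|: Cset n (i - 1)) (Cset n k).
Proof.
move=> a b c.
apply: disjU; [apply: disjU|].
- exact: (disj_AC (i:=i) (i':=k)).
- exact: (disj_BC (i:=i) (i':=k)).
- apply: disj_CC; lia.
Qed.

End Dis.


Section Main.
Variable n : nat.
Hypothesis pn : prime n.
Hypothesis nodd : n %% 2 = 1.
Hypothesis n3 : 3 <= n.

Definition h := (n - 1) %/ 2.
Lemma hE : n = 2 * h + 1. Proof. rewrite /h; lia. Qed.

Lemma cop i : 1 <= i < n -> coprime n i.
Proof.
move=> hi; rewrite prime_coprime //; apply/negP => /dvdn_leq; lia.
Qed.

Definition fac t := if t < 3 * h then M n (t %/ 3 + 1) (t %% 3 + 1) else Cset n (t - 2 * h).

Lemma facE1 i j : 1 <= i <= h -> 1 <= j <= 3 -> fac (3 * (i - 1) + (j - 1)) = M n i j.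
Proof.
move=> hi hj; rewrite /fac ifT; last lia.
congr M; lia.
Qed.

Lemma facE2 t : 3 * h <= t -> fac t = Cset n (t - 2 * h).
Proof. by move=> ht; rewrite /fac ifF //; lia. Qed.

Lemma facone t : t < 2 * n - 1 -> one_factor (fac t).
Proof.
move=> ht; rewrite /fac; case: ifP => h1.
  apply: (M_one nodd n3); apply: cop; have := hE; lia.
exact: (Cset_one nodd n3).
Qed.

Lemma M_sub i j : 1 <= i < n -> 1 <= j <= 3 -> M n i j \subset Aset n i :|: Bset n i :|: Cset n (i - 1).
Proof.
move=> hi hj; rewrite -(M_union nodd n3 (cop hi)).
by case: j hj => [|[|[|[|j]]]] //= _; rewrite /= ?subsetUl ?subsetUr //;
  apply: subset_trans (subsetUl _ _); rewrite ?subsetUl ?subsetUr.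
Qed.

Lemma disj_sub (A A' B B' : {set {set 'I_(2*n)}}) : A \subset A' -> B \subset B' -> disj A' B' -> @disj n A B.
Proof. by move=> s1 s2 d e h1 h2; apply: (d e); [apply: (subsetP s1)|apply: (subsetP s2)]. Qed.

Lemma disj_Mj i j j' : 1 <= i < n -> 1 <= j <= 3 -> 1 <= j' <= 3 -> j != j' ->
  disj (M n i j) (M n i j').
Proof.
move=> hi hj hj' d e /imsetP [p _ ->] /imsetP [q _ E].
have inj := @phio_inj n i (i - 1) (cop hi).
case: (set2_eq E) => [] [/inj e1 /inj e2].
  subst q; move: e2 => /(congr1 (@nat_of_ord _)); rewrite !(GsoE nodd n3) => e2.
  by have := Gs_dist nodd n3 (ltn_ord p) hj hj' d; rewrite e2 eqxx.
have e3 : Gso j q = p by rewrite -e2 (Gso_inv nodd n3).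
move: e1; rewrite -e3 => /(congr1 (@nat_of_ord _)); rewrite !(GsoE nodd n3) => e1.
by have := Gs_dist nodd n3 (ltn_ord q) hj hj' d; rewrite e1 eqxx.
Qed.

Lemma fac_disj t t' : t < 2 * n - 1 -> t' < 2 * n - 1 -> t != t' -> disj (fac t) (fac t').
Proof.
have Hn := hE.
wlog le: t t' / t <= t'.
  move=> W a b c; case: (leqP t t') => l; first exact: W.
  by apply: disjC; apply: W; rewrite // 1?eq_sym //; lia.
move=> a b c.
case: (ltnP t' (3 * h)) => h2.
  have h1 : t < 3 * h by lia.
  rewrite /fac h1 h2.
  case: (boolP (t %/ 3 == t' %/ 3)) => e.
    rewrite (eqP e); apply: disj_Mj; lia.
  apply: (disj_sub (M_sub _ _) (M_sub _ _) (disj_ABC _ _ _ _)); lia.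
rewrite (facE2 h2).
case: (ltnP t (3 * h)) => h1.
  rewrite /fac h1.
  apply: (disj_sub (M_sub _ _) (subxx _) (disj_ABC_C _ _ _)); lia.
rewrite (facE2 h1); apply: disj_CC; lia.
Qed.

Lemma one_nonempty (F : {set {set 'I_(2*n)}}) : one_factor F -> exists e, e \in F.
Proof.
case=> _ H; have n0 : 0 < 2 * n by lia.
move: (H (Ordinal n0)) => /eqP/cards1P [e E].
have : e \in [set e0 in F | Ordinal n0 \in e0] by rewrite E set11.
by rewrite inE => /andP [he _]; exists e.
Qed.

Lemma modA a b : a < n -> b < n -> (b + n - a) %% n = if a <= b then b - a else b + n - a.
Proof.
move=> ha hb; case: ifP => l.
  by rewrite (_ : b + n - a = b - a + n) ?modnDr ?modn_small //; lia.
rewrite modn_small //; lia.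
Qed.

Lemma pairD a b : a < n -> b < n -> a != b ->
  exists d, 1 <= d <= h /\ ((b + n - a) %% n = d %% n \/ (a + n - b) %% n = d %% n).
Proof.
move=> ha hb ab; have Hn := hE.
rewrite (modA ha hb) (modA hb ha).
case: (leqP a b) => l; case: (leqP b a) => l'; try lia.
- case: (leqP (b - a) h) => l2.
    by exists (b - a); split; [lia|left; rewrite modn_small //; lia].
  exists (a + n - b); split; [lia|right; rewrite modn_small //; lia].
- case: (leqP (a - b) h) => l2.
    by exists (a - b); split; [lia|right; rewrite modn_small //; lia].
  exists (b + n - a); split; [lia|left; rewrite modn_small //; lia].
Qed.

Definition ABC i := Aset n i :|: Bset n i :|: Cset n (i - 1).

Lemma classify (x y : 'I_(2*n)) : x != y ->
  (exists2 i, 1 <= i <= h & [set x; y] \in ABC i) \/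
  (exists2 k, h <= k < n & [set x; y] \in Cset n k).
Proof.
move=> xy; have Hn := hE; have bx := ltn_ord x; have bY := ltn_ord y.
have Cc : forall (u v : 'I_(2*n)), u < n -> n <= v -> [set u; v] \in Cset n ((u + v) %% n).
  move=> u v hu hv; rewrite inE; apply/existsP; exists u; apply/existsP; exists v.
  by rewrite eqxx hu hv modn_mod eqxx.
have Cres : forall k, k < n -> [set x; y] \in Cset n k ->
   (exists2 i, 1 <= i <= h & [set x; y] \in ABC i) \/
   (exists2 k, h <= k < n & [set x; y] \in Cset n k).
  move=> k hk hC; case: (ltnP k h) => l.
    left; exists (k + 1); first lia.
    by rewrite /ABC (_ : k + 1 - 1 = k) ?addnK // !in_setU hC orbT.
  by right; exists k; first lia.
case: (ltnP x n) => hx; case: (ltnP y n) => hy.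
- left; have xy' : nat_of_ord x != nat_of_ord y by [].
  have [d [hd [E|E]]] := pairD hx hy xy'; exists d => //; rewrite /ABC !in_setU.
    suff -> : [set x; y] \in Aset n d by [].
    rewrite inE; apply/existsP; exists x; apply/existsP; exists y.
    by rewrite eqxx hx hy E eqxx.
  suff -> : [set x; y] \in Aset n d by [].
  rewrite inE; apply/existsP; exists y; apply/existsP; exists x.
  by rewrite setUC eqxx hx hy E eqxx.
- apply: (Cres ((x + y) %% n)); first by rewrite ltn_mod; lia.
  exact: Cc.
- apply: (Cres ((y + x) %% n)); first by rewrite ltn_mod; lia.
  by rewrite setUC; apply: Cc.
- left.
  have xy' : x - n != y - n by apply/negP => /eqP E; move/negP: xy; apply; apply/eqP/ord_inj; lia.
  have a1 : x - n < n by lia.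
  have a2 : y - n < n by lia.
  have [d [hd [E|E]]] := pairD a1 a2 xy'.
    exists d => //; rewrite /ABC !in_setU.
    suff -> : [set x; y] \in Bset n d by rewrite orbT.
    rewrite inE; apply/existsP; exists x; apply/existsP; exists y.
    rewrite eqxx hx hy (_ : y + n - x = y - n + n - (x - n)) ?E ?eqxx //; lia.
  exists d => //; rewrite /ABC !in_setU.
  suff -> : [set x; y] \in Bset n d by rewrite orbT.
  rewrite inE; apply/existsP; exists y; apply/existsP; exists x.
  rewrite setUC eqxx hx hy (_ : x + n - y = x - n + n - (y - n)) ?E ?eqxx //; lia.
Qed.

Lemma cover_fac (e : {set 'I_(2*n)}) : #|e| == 2 -> exists2 t, t < 2 * n - 1 & e \in fac t.
Proof.
have Hn := hE.
case/cards2P => [x [y [xy ->]]]; case: (classify xy) => [[i hi hm]|[k hk hm]].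
  have c : 1 <= i < n by lia.
  move: hm; rewrite /ABC -(M_union nodd n3 (cop c)).
  case/setUP => [/setUP []|] hM.
  - exists (3 * (i - 1) + (1 - 1)); first lia. by rewrite facE1.
  - exists (3 * (i - 1) + (2 - 1)); first lia. by rewrite facE1.
  - exists (3 * (i - 1) + (3 - 1)); first lia. by rewrite facE1.
exists (k + 2 * h); first lia.
by rewrite facE2 ?addnK //; lia.
Qed.

Definition Rset : {set {set {set 'I_(2*n)}}} := [set fac t | t : 'I_(2 * n - 1)].

Lemma fac_inj : injective (fun t : 'I_(2 * n - 1) => fac t).
Proof.
move=> t t' /= E; apply: ord_inj; apply/eqP; apply/negP => /negP neq.
have [e he] := one_nonempty (facone (ltn_ord t)).
apply: (fac_disj (ltn_ord t) (ltn_ord t') neq he); by rewrite -E.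
Qed.

Lemma Rset_ok : one_factorization Rset.
Proof.
split; last split.
- apply/and3P; split.
  + apply/eqP/setP => e; apply/bigcupP/idP.
      case=> F /imsetP [t _ ->] he.
      by have [S _] := facone (ltn_ord t); apply: (subsetP S).
    rewrite inE => /cover_fac [t ht he].
    by exists (fac t) => //; apply/imsetP; exists (Ordinal ht).
  + apply/trivIsetP => A B /imsetP [t _ ->] /imsetP [t' _ ->] neq.
    have tt : nat_of_ord t != t' by apply/negP => /eqP E; move/negP: neq; apply; rewrite E.
    rewrite -setI_eq0; apply/eqP/setP => e; rewrite inE in_set0.
    apply/negbTE/negP => /andP [h1 h2].
    exact: (fac_disj (ltn_ord t) (ltn_ord t') tt h1 h2).
  + apply/negP => /imsetP [t _ E].
    have [e he] := one_nonempty (facone (ltn_ord t)).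
    by rewrite -E in_set0 in he.
- by move=> F /imsetP [t _ ->]; apply: facone.
- by rewrite card_imset ?card_ord //; apply: fac_inj.
Qed.

End Main.


Unset Implicit Arguments.
Theorem lemma4 (n : nat) :
  prime n -> (n %% 6 = 1 \/ n %% 6 = 5) ->
  exists R : {set {set {set 'I_(2*n)}}},
    one_factorization R /\
    exists Rf : nat -> nat -> {set {set 'I_(2*n)}},
      (n %% 6 = 5 ->
        (forall F, F \in R <->
           exists i j, [/\ 1 <= i <= (2 * n - 1) %/ 3, 1 <= j <= 3 & F = Rf i j]) /\
        (forall i, 1 <= i <= (n - 1) %/ 2 ->
           Rf i 1 :|: Rf i 2 :|: Rf i 3 = Aset n i :|: Bset n i :|: Cset n (i - 1)) /\
        (forall i, (n + 1) %/ 2 <= i <= (2 * n - 1) %/ 3 ->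
           [/\ Rf i 1 = Cset n (3 * i - n - 2),
               Rf i 2 = Cset n (3 * i - n - 1) &
               Rf i 3 = Cset n (3 * i - n)])) /\
      (n %% 6 = 1 ->
        (forall F, F \in R <->
           (exists i j, [/\ 1 <= i <= (n - 1) %/ 2, 1 <= j <= 3 & F = Rf i j]) \/
           (exists i, (n - 1) %/ 2 <= i <= n - 1 /\ F = Cset n i)) /\
        (forall i, 1 <= i <= (n - 1) %/ 2 ->
           Rf i 1 :|: Rf i 2 :|: Rf i 3 = Aset n i :|: Bset n i :|: Cset n (i - 1))).
Proof.
move=> pn h6.
have nodd : n %% 2 = 1 by lia.
have n3 : 3 <= n by have := prime_gt1 pn; lia.
have hh : h n = (n - 1) %/ 2 by [].
have Un : forall i, 1 <= i <= (n - 1) %/ 2 ->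
    fac n (3 * (i - 1) + (1 - 1)) :|: fac n (3 * (i - 1) + (2 - 1)) :|: fac n (3 * (i - 1) + (3 - 1))
    = Aset n i :|: Bset n i :|: Cset n (i - 1).
  move=> i hi; rewrite !facE1 -?hh //.
  apply: (M_union nodd n3); apply: (cop pn); lia.
exists (Rset n); split; first exact: (Rset_ok pn nodd n3).
exists (fun i j => fac n (3 * (i - 1) + (j - 1))).
split => H6.
  split; [|split].
  - move=> F; split.
      case/imsetP => t _ ->; have := ltn_ord t => ht.
      exists (t %/ 3 + 1), (t %% 3 + 1); split; try lia.
      congr fac; lia.
    case=> i [j [hi hj ->]]; apply/imsetP.
    have ht : 3 * (i - 1) + (j - 1) < 2 * n - 1 by lia.
    by exists (Ordinal ht).
  - exact: Un.
  - move=> i hi; rewrite !facE2 ?hh; try lia.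
    split; congr Cset; lia.
split.
- move=> F; split.
    case/imsetP => t _ ->; have := ltn_ord t => ht.
    case: (ltnP t (3 * h n)) => l.
      left; exists (t %/ 3 + 1), (t %% 3 + 1); split; try lia.
      congr fac; lia.
    right; exists (t - 2 * h n); rewrite facE2 //; split => //; lia.
  case=> [[i [j [hi hj ->]]]|[i [hi ->]]]; apply/imsetP.
    have ht : 3 * (i - 1) + (j - 1) < 2 * n - 1 by lia.
    by exists (Ordinal ht).
  have ht : i + 2 * h n < 2 * n - 1 by rewrite hh; lia.
  exists (Ordinal ht) => //=; rewrite facE2 ?addnK //; lia.
- exact: Un.
Qed.
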